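(* Let $M$ be a set of goods, $v$ an additive valuation on $M$, $n$ a positive integer, $k<n$ a nonnegative integer, $S\subseteq M$ with $|S|=2k$, and $x\ge0$ such that $v(g)\le\mathrm{MMS}^n_v(M)/2+x$ for all $g\in S$. Then $\mathrm{MMS}^{n-k}_v(M\setminus S)\ge\mathrm{MMS}^n_v(M)-2x$.
   Context: $\mathrm{MMS}^d_v(T)$ is the maximum, over all partitions $(P_1,\dots,P_d)$ of $T$ into $d$ (possibly empty) bundles, of $\min_j v(P_j)$. *)

(* Defs.v *)
From mathcomp Require Import all_boot all_order all_algebra.
Set Implicit Arguments. Unset Strict Implicit. Unset Printing Implicit Defensive.
Import Order.TTheory GRing.Theory Num.Theory.
Local Open Scope ring_scope.

(* Goods are the elements of a finite type G; a set of goods is a {set G}.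
   An additive valuation is given by v : G -> R (values of single goods);
   the value of a bundle B is \sum_(g in B) v g. *)
Definition bval (R : realFieldType) (G : finType) (v : G -> R) (B : {set G}) : R :=
  \sum_(g in B) v g.

(* A partition of T into d (possibly empty) bundles is given by an assignment
   a : G -> 'I_d; bundle j is [set g in T | a g == j]. *)
Definition bundle (G : finType) (d : nat) (T : {set G}) (a : {ffun G -> 'I_d})
  (j : 'I_d) : {set G} := [set g in T | a g == j].

Definition part_min (R : realFieldType) (G : finType) (v : G -> R) (d' : nat)
  (T : {set G}) (a : {ffun G -> 'I_d'.+1}) : R :=
  \big[Order.min/bval v (bundle T a ord0)]_(j < d'.+1) bval v (bundle T a j).

(* MMS^d_v(T): maximum over all partitions of T into d bundles of the minimal
   bundle value.  Only meaningful for d >= 1 (set to 0 for d = 0). *)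
Definition MMS (R : realFieldType) (G : finType) (v : G -> R) (d : nat)
  (T : {set G}) : R :=
  if d is d'.+1 then
    \big[Order.max/@part_min R G v d' T [ffun=> ord0]]_(a : {ffun G -> 'I_d'.+1})
      @part_min R G v d' T a
  else 0.

(* Main.v *)
Require Import Defs.
From mathcomp Require Import all_boot all_order all_algebra zify.
Import Order.TTheory GRing.Theory Num.Theory.
Local Open Scope ring_scope.

From mathcomp Require Import lra.
Lemma bigmax_ge (R : realFieldType) (I : eqType) (r : seq I) (F : I -> R) x0 i0 :
  i0 \in r -> F i0 <= \big[Order.max/x0]_(i <- r) F i.
Proof.
elim: r => // i r IH; rewrite inE big_cons => /orP[/eqP->|/IH h].
  by rewrite le_max lexx.
by rewrite le_max h orbT.
Qed.

Lemma bigmin_le (R : realFieldType) (I : eqType) (r : seq I) (F : I -> R) x0 i0 :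
  i0 \in r -> \big[Order.min/x0]_(i <- r) F i <= F i0.
Proof.
elim: r => // i r IH; rewrite inE big_cons => /orP[/eqP->|/IH h].
  by rewrite ge_min lexx.
by rewrite ge_min h orbT.
Qed.

Lemma bigmax_attained (R : realFieldType) (I : finType) (F : I -> R) x0 :
  (exists i, x0 = F i) -> exists i, \big[Order.max/x0]_(i : I) F i = F i.
Proof.
move=> h0; apply: (big_ind (fun y => exists i, y = F i)) => //.
move=> y z [i ->] [j ->]; case: (leP (F i) (F j)) => _; by [exists j | exists i].
by move=> i _; exists i.
Qed.

Lemma bval_mono (R : realFieldType) (G : finType) (v : G -> R) (A B : {set G}) :
  A \subset B -> (forall g, g \in B -> 0 <= v g) -> bval v A <= bval v B.
Proof.
move=> sAB hB; rewrite /bval [X in _ <= X](big_setID A) /= (setIidPr sAB) lerDl.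
by apply: sumr_ge0 => g; rewrite inE => /andP[_]; apply: hB.
Qed.
Arguments bval_mono {R G v A B}.
Lemma half2 q : ((2 * q)./2 = q)%N.
Proof. by rewrite mul2n doubleK. Qed.
Lemma half2S q : ((2 * q).+1./2 = q)%N.
Proof. by rewrite mul2n -[(q.*2).+1]/(true + q.*2)%N half_bit_double. Qed.
Lemma sum_bool_card N (A : {set 'I_N}) : (\sum_(j < N) (j \in A : nat))%N = #|A|.
Proof. rewrite -sum1_card [RHS]big_mkcond; apply: eq_bigr => j _; by case: (j \in A). Qed.

Theorem lemma32 (R : realFieldType) (G : finType) (M : {set G}) (v : G -> R)
  (n k : nat) (S : {set G}) (x : R) :
  (forall g, g \in M -> 0 <= v g) ->
  (0 < n)%N -> (k < n)%N ->
  S \subset M -> #|S| = (2 * k)%N ->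
  0 <= x ->
  (forall g, g \in S -> v g <= MMS v n M / 2 + x) ->
  MMS v n M - 2 * x <= MMS v (n - k) (M :\: S).
Proof.
move=> v0 hn hkn sSM cS x0 hS.
case: n hn hkn hS => [//|n'] _ hkn hS.
set mu := MMS v n'.+1 M in hS *.
have [a Ha] : exists a : {ffun G -> 'I_n'.+1}, mu = part_min v M a.
  rewrite /mu /MMS; apply: bigmax_attained; by exists [ffun=> ord0].
have Hb : forall j, mu <= bval v (bundle M a j).
  move=> j; rewrite Ha /part_min; apply: bigmin_le; exact: mem_index_enum.
pose s (j : 'I_n'.+1) := #|bundle M a j :&: S|.
pose Z := [set j | s j == 0%N].
pose O := [set j | s j == 1%N].
have HS : #|S| = (\sum_j s j)%N.
  rewrite -sum1_card (bigop.partition_big a xpredT) //=.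
  apply: eq_bigr => j _; rewrite /s -sum1_card. apply: eq_bigl => g.
  rewrite /bundle !inE; case gS: (g \in S); rewrite ?andbF ?andbT //.
  by rewrite (subsetP sSM _ gS).
have Hcount : (2 * n'.+1 <= 2 * #|Z| + #|O| + 2 * k)%N.
  have h1 : forall j, (2 <= 2 * (j \in Z) + (j \in O) + s j)%N.
    by move=> j; rewrite !inE; case: (s j) => [|[|t]].
  have : (\sum_(j < n'.+1) 2 <= \sum_(j < n'.+1) (2 * (j \in Z) + (j \in O) + s j))%N.
    by apply: leq_sum => j _; exact: h1.
  rewrite !big_split /= sum_nat_const card_ord !sum_bool_card big1_eq -HS cS addn0 mulnC (mul2n #|Z|) -addnn. by [].
have [m Hm] : exists m, (n'.+1 - k)%N = m.+1 by exists (n'.+1 - k).-1; lia.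
rewrite Hm.
pose tgt (j : 'I_n'.+1) : nat := if j \in Z then index j (enum Z)
  else if j \in O then (#|Z| + (index j (enum O))./2)%N else 0%N.
pose b : {ffun G -> 'I_m.+1} := [ffun g => inord (tgt (a g))].
have inb : forall g j t, g \in M -> g \notin S -> a g = j -> tgt j = t ->
    g \in bundle (M :\: S) b (inord t).
  move=> g j t gM gS agj tj; by rewrite /bundle !inE gS gM ffunE agj tj eqxx.
have nZ : forall j g, j \in Z -> g \in bundle M a j -> g \notin S.
  move=> j g; rewrite inE /s => /eqP/cards0_eq/setP/(_ g) e gP.
  move: gP; rewrite inE => /andP[gM /eqP agj].
  apply/negP => gS; by rewrite !inE gM agj eqxx gS in e.
have one : forall j, j \in O -> mu / 2 - x <= bval v (bundle M a j :\: S).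
  move=> j; rewrite inE /s => /cards1P[g0 e].
  have g0S : g0 \in S by move/setP: (e) => /(_ g0); rewrite !inE eqxx => /andP[].
  have := Hb j; rewrite /bval (big_setID S) /= e big_set1.
  have := hS _ g0S; lra.
have key : forall t : 'I_m.+1, mu - 2 * x <= bval v (bundle (M :\: S) b t).
  move=> t.
  have nonneg : forall g, g \in bundle (M :\: S) b t -> 0 <= v g.
    move=> g; rewrite /bundle !inE => /andP[/andP[_ gM] _]; exact: v0.
  case: (ltnP t #|Z|) => ht.
    pose j := nth ord0 (enum Z) t.
    have jZ : j \in Z by rewrite -mem_enum mem_nth // -cardE.
    have tj : tgt j = t by rewrite /tgt jZ index_uniq // ?enum_uniq // -cardE.
    have sub : bundle M a j \subset bundle (M :\: S) b t.
      apply/subsetP => g gP; rewrite -[t]inord_val; apply: (inb _ j) => //.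
      + by move: gP; rewrite inE => /andP[].
      + exact: (nZ j).
      + by move: gP; rewrite inE => /andP[_ /eqP].
    have := bval_mono sub nonneg; have := Hb j; lra.
  have hq : (2 * (t - #|Z|) + 1 < #|O|)%N by have := ltn_ord t; lia.
  pose j1 := nth ord0 (enum O) (2 * (t - #|Z|)).
  pose j2 := nth ord0 (enum O) (2 * (t - #|Z|)).+1.
  have j1O : j1 \in O by rewrite -mem_enum mem_nth // -cardE; lia.
  have j2O : j2 \in O by rewrite -mem_enum mem_nth // -cardE; lia.
  have notZ : forall j, j \in O -> j \notin Z.
    by move=> j; rewrite !inE => /eqP->.
  have tj1 : tgt j1 = t.
    rewrite /tgt (negPf (notZ _ j1O)) j1O index_uniq ?enum_uniq -?cardE //; last lia.
    rewrite half2; lia.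
  have tj2 : tgt j2 = t.
    rewrite /tgt (negPf (notZ _ j2O)) j2O index_uniq ?enum_uniq -?cardE //; last lia.
    rewrite half2S; lia.
  have j12 : j1 != j2.
    by rewrite nth_uniq ?enum_uniq -?cardE //; lia.
  have sub : forall j, tgt j = t -> bundle M a j :\: S \subset bundle (M :\: S) b t.
    move=> j tj; apply/subsetP => g /setDP[]; rewrite inE => /andP[gM /eqP agj] gS.
    rewrite -[t]inord_val; exact: (inb _ j).
  rewrite /bval (big_setID (bundle M a j1)) /=.
  have s1 : bval v (bundle M a j1 :\: S) <= bval v (bundle (M :\: S) b t :&: bundle M a j1).
    apply: bval_mono.
      by rewrite subsetI sub // subsetDl.
    by move=> g /setIP[/nonneg].
  have s2 : bval v (bundle M a j2 :\: S) <= bval v (bundle (M :\: S) b t :\: bundle M a j1).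
    apply: bval_mono.
      rewrite subsetD sub //=; apply/pred0P => g /=; rewrite !inE.
      apply/negP => /andP[/andP[_ /andP[_ /eqP e1]] /andP[_ /eqP e2]].
      by move: j12; rewrite -e1 -e2 eqxx.
    by move=> g /setDP[/nonneg].
  have := one _ j1O; have := one _ j2O; rewrite /bval in s1 s2 *; lra.
apply: (@le_trans _ _ (part_min v (M :\: S) b)).
  rewrite /part_min; apply: (big_ind (fun y => mu - 2 * x <= y)) => //.
  by move=> y z; rewrite le_min => -> ->.
rewrite /MMS; apply: bigmax_ge; exact: mem_index_enum.
Qed.
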